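(* Let $\mathbb{F}\in\{\mathbb{R},\mathbb{C}\}$, let $\{\varphi_i\}_{i=1}^M$ be a Parseval frame for $\mathbb{F}^N$, and let $0<k\leq N$. Assume that all $k$-element subsets of the frame span parallelotopes of the same $k$-dimensional volume, i.e. $v_k(\Phi_K)$ is the same for all $K\subseteq[M]$ with $|K|=k$. Then all $(k-1)$-element subsets also span parallelotopes of the same $(k-1)$-dimensional volume, i.e. $v_{k-1}(\Phi_J)$ is the same for all $J\subseteq[M]$ with $|J|=k-1$.
   Context: A Parseval frame for $\mathbb{F}^N$ is a family $\{\varphi_i\}_{i=1}^M\subseteq\mathbb{F}^N$ whose $N\times M$ matrix $\Phi$ (columns $\varphi_i$) satisfies $\Phi\Phi^*=I$. For $K\subseteq[M]$, $\Phi_K$ is the submatrix of columns indexed by $K$, and for an $N\times m$ matrix $F$ with $m\le N$, $v_m(F)=\sqrt{\det(F^*F)}$ (with $v_0=1$). *)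

(* Defs.v *)
From HB Require Import structures.
From mathcomp Require Import all_boot all_order all_algebra.
Set Implicit Arguments. Unset Strict Implicit. Unset Printing Implicit Defensive.
Import Order.TTheory GRing.Theory Num.Theory.
Local Open Scope ring_scope.

(* Phi_K : the N x |K| submatrix of the columns of Phi indexed by K
   (columns taken in increasing order of their index). *)
Definition subcols (T : Type) (N M : nat) (Phi : 'M[T]_(N, M)) (K : {set 'I_M})
  : 'M[T]_(N, #|K|) := colsub (@enum_val _ (mem K)) Phi.

(* Real case F = R (any real closed field): adjoint = transpose. *)
Definition parsevalR (R : rcfType) (N M : nat) (Phi : 'M[R]_(N, M)) : Prop :=
  Phi *m Phi^T = 1%:M.
Definition volR (R : rcfType) (N m : nat) (F : 'M[R]_(N, m)) : R :=
  Num.sqrt (\det (F^T *m F)).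

(* Complex case F = C (any numeric algebraically closed field):
   adjoint = conjugate transpose. *)
Definition adjmx (C : numClosedFieldType) (m n : nat) (A : 'M[C]_(m, n))
  : 'M[C]_(n, m) := map_mx Num.conj A^T.
Definition parsevalC (C : numClosedFieldType) (N M : nat) (Phi : 'M[C]_(N, M))
  : Prop := Phi *m adjmx Phi = 1%:M.
Definition volC (C : numClosedFieldType) (N m : nat) (F : 'M[C]_(N, m)) : C :=
  sqrtC (\det (adjmx F *m F)).

(* Main.v *)
Require Import Defs.
From HB Require Import structures.
From mathcomp Require Import all_boot all_order all_algebra all_fingroup.
Import Order.TTheory GRing.Theory Num.Theory.
Set Implicit Arguments. Unset Strict Implicit. Unset Printing Implicit Defensive.
Local Open Scope ring_scope.

Definition adjm (R : numFieldType) (s : {rmorphism R -> R}) m n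
  (X : 'M[R]_(m, n)) : 'M[R]_(n, m) := map_mx s X^T.
Definition gram (R : numFieldType) (s : {rmorphism R -> R}) n m
  (F : 'M[R]_(n, m)) : R := \det (adjm s F *m F).

Lemma adjmM (R : numFieldType) (s : {rmorphism R -> R}) m n p
  (X : 'M[R]_(m, n)) (Y : 'M[R]_(n, p)) :
  adjm s (X *m Y) = adjm s Y *m adjm s X.
Proof. by rewrite /adjm trmx_mul map_mxM. Qed.

Lemma adjmK (R : numFieldType) (s : {rmorphism R -> R}) (hK : involutive s)
  m n (X : 'M[R]_(m, n)) : adjm s (adjm s X) = X.
Proof. by apply/matrixP => i j; rewrite !mxE hK. Qed.

Lemma adjm_row (R : numFieldType) (s : {rmorphism R -> R}) m n1 n2
  (X : 'M[R]_(m, n1)) (Y : 'M[R]_(m, n2)) :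
  adjm s (row_mx X Y) = col_mx (adjm s X) (adjm s Y).
Proof. by rewrite /adjm tr_row_mx map_col_mx. Qed.

Lemma adjmB (R : numFieldType) (s : {rmorphism R -> R}) m n
  (X Y : 'M[R]_(m, n)) : adjm s (X - Y) = adjm s X - adjm s Y.
Proof. by apply/matrixP => i j; rewrite !mxE rmorphB. Qed.

Lemma adjm1 (R : numFieldType) (s : {rmorphism R -> R}) n :
  adjm s (1%:M : 'M[R]_n) = 1%:M.
Proof. by rewrite /adjm trmx1 map_mx1. Qed.

Lemma adjm0 (R : numFieldType) (s : {rmorphism R -> R}) m n :
  adjm s (0 : 'M[R]_(m, n)) = 0.
Proof. by apply/matrixP => i j; rewrite !mxE rmorph0. Qed.

Lemma quadE (R : numFieldType) (s : {rmorphism R -> R}) N (y : 'cV[R]_N) :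
  (adjm s y *m y) 0 0 = \sum_r s (y r 0) * y r 0.
Proof. by rewrite !mxE; apply: eq_bigr => r _; rewrite !mxE. Qed.

Lemma quad_ge0 (R : numFieldType) (s : {rmorphism R -> R})
  (hge : forall y, 0 <= s y * y) N (y : 'cV[R]_N) : 0 <= (adjm s y *m y) 0 0.
Proof. by rewrite quadE; apply: sumr_ge0 => r _. Qed.

Lemma quad_eq0 (R : numFieldType) (s : {rmorphism R -> R})
  (hge : forall y, 0 <= s y * y) (heq : forall y, s y * y = 0 -> y = 0)
  N (y : 'cV[R]_N) : (adjm s y *m y) 0 0 = 0 -> y = 0.
Proof.
rewrite quadE => h; apply/matrixP => r c; rewrite (ord1 c) mxE.
by apply: heq; apply: (psumr_eq0P _ h).
Qed.

Lemma ker_gram (R : numFieldType) (s : {rmorphism R -> R})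
  (hge : forall y, 0 <= s y * y) (heq : forall y, s y * y = 0 -> y = 0)
  N m (F : 'M[R]_(N, m)) (x : 'cV[R]_m) :
  adjm s F *m F *m x = 0 -> F *m x = 0.
Proof.
move=> h; apply: (quad_eq0 hge heq).
have : adjm s x *m (adjm s F *m F *m x) = 0 by rewrite h mulmx0.
by rewrite adjmM !mulmxA => ->; rewrite mxE.
Qed.

Lemma gram_sing (R : numFieldType) (s : {rmorphism R -> R})
  (hge : forall y, 0 <= s y * y) (heq : forall y, s y * y = 0 -> y = 0)
  N m (F : 'M[R]_(N, m)) (v : 'cV[R]_N) :
  \det (adjm s F *m F) = 0 -> gram s (row_mx v F) = 0.
Proof.
move/eqP; rewrite -det_tr => /det0P [u u0 hu].
have hA : adjm s F *m F *m u^T = 0.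
  by rewrite -[adjm s F *m F]trmxK -trmx_mul hu trmx0.
have hF := ker_gram hge heq hA.
apply/eqP; rewrite /gram -det_tr; apply/det0P.
exists (col_mx (0 : 'cV[R]_1) u^T)^T.
  apply: contra u0 => /eqP h; apply/eqP.
  have := congr1 (@trmx _ _ _) h; rewrite trmxK trmx0.
  by move/eqP; rewrite col_mx_eq0 => /andP [_ /eqP /(congr1 (@trmx _ _ _))]; rewrite trmxK trmx0.
rewrite -trmx_mul -mulmxA mul_row_col mulmx0 add0r hF.
by rewrite mulmx0 trmx0.
Qed.
Definition projP (R : numFieldType) (s : {rmorphism R -> R}) N m
  (F : 'M[R]_(N, m)) : 'M[R]_N :=
  1%:M - F *m invmx (adjm s F *m F) *m adjm s F.

Lemma gram_border (R : numFieldType) (s : {rmorphism R -> R}) (hK : involutive s)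
  N m (F : 'M[R]_(N, m)) (v : 'cV[R]_N) :
  \det (adjm s F *m F) != 0 ->
  gram s (row_mx v F) =
  (adjm s (projP s F *m v) *m (projP s F *m v)) 0 0 * \det (adjm s F *m F).
Proof.
move=> hd.
have hU : adjm s F *m F \in unitmx by rewrite unitmxE unitfE.
set A := adjm s F *m F in hd hU *.
set x := invmx A *m (adjm s F *m v).
have hw : projP s F *m v = v - F *m x.
  by rewrite /projP mulmxBl mul1mx -!mulmxA.
rewrite hw; set w := v - F *m x.
have hv : row_mx v F = row_mx w F *m block_mx 1%:M 0 x 1%:M.
  by rewrite mul_row_block !mulmx1 mulmx0 /w subrK add0r.
have hFw : adjm s F *m w = 0.
  by rewrite /w mulmxBr mulmxA -/A mulKVmx // subrr.
have hwF : adjm s w *m F = 0.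
  by rewrite -[F in LHS](adjmK hK) -adjmM hFw adjm0.
rewrite /gram hv adjmM -mulmxA det_mulmx mulmxA det_mulmx.
rewrite adjm_row mul_col_row hFw hwF det_ublock det_mx11 det_lblock !det1 mulr1.
rewrite /adjm det_map_mx det_tr det_lblock !det1 mulr1 rmorph1 mul1r mulr1.
by [].
Qed.

Lemma gram_ge0 (R : numFieldType) (s : {rmorphism R -> R}) (hK : involutive s)
  (hge : forall y, 0 <= s y * y) (heq : forall y, s y * y = 0 -> y = 0)
  N m (F : 'M[R]_(N, m)) : 0 <= gram s F.
Proof.
elim: m F => [|m IH] F; first by rewrite /gram det_mx00.
have -> : F = row_mx (lsubmx (F : 'M_(N, 1 + m))) (rsubmx (F : 'M_(N, 1 + m))).
  by rewrite hsubmxK.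
set F0 := rsubmx _; set v := lsubmx _.
have [h0|h0] := eqVneq (\det (adjm s F0 *m F0)) 0.
  by rewrite (gram_sing hge heq v h0).
rewrite (gram_border hK v h0); apply: mulr_ge0; first exact: quad_ge0.
exact: IH.
Qed.

Lemma sum_quad_cols (R : numFieldType) (s : {rmorphism R -> R}) N M
  (X : 'M[R]_(N, M)) :
  \sum_i (adjm s (col i X) *m col i X) 0 0 = \tr (adjm s X *m X).
Proof.
rewrite /mxtrace; apply: eq_bigr => i _; rewrite !mxE.
by apply: eq_bigr => r _; rewrite !mxE.
Qed.

Lemma projP_adj (R : numFieldType) (s : {rmorphism R -> R}) (hK : involutive s)
  N m (F : 'M[R]_(N, m)) : adjm s (projP s F) = projP s F.
Proof.
rewrite /projP adjmB adjm1 !adjmM adjmK // mulmxA; congr (_ - _ *m _ *m _).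
rewrite {1}/adjm trmx_inv map_invmx; congr invmx.
by rewrite -/(adjm s _) adjmM adjmK.
Qed.

Lemma projP_idem (R : numFieldType) (s : {rmorphism R -> R})
  N m (F : 'M[R]_(N, m)) : \det (adjm s F *m F) != 0 ->
  projP s F *m projP s F = projP s F.
Proof.
move=> hd; have hU : adjm s F *m F \in unitmx by rewrite unitmxE unitfE.
set Q := F *m invmx (adjm s F *m F) *m adjm s F.
have hQ : Q *m Q = Q.
  rewrite /Q -!mulmxA; congr (_ *m _); rewrite !mulmxA.
  by rewrite -(mulmxA _ (adjm s F) F) mulVmx // mul1mx.
rewrite /projP -/Q (mulmxBl 1%:M Q) mul1mx mulmxBr mulmx1 hQ subrr subr0.
by [].
Qed.

Lemma tr_projP (R : numFieldType) (s : {rmorphism R -> R})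
  N m (F : 'M[R]_(N, m)) : \det (adjm s F *m F) != 0 ->
  \tr (projP s F) = N%:R - m%:R.
Proof.
move=> hd; have hU : adjm s F *m F \in unitmx by rewrite unitmxE unitfE.
rewrite /projP raddfB /= mxtrace1 -mulmxA mxtrace_mulC -(mulmxA _ (adjm s F) F) mulVmx //.
by rewrite mxtrace1.
Qed.

Lemma sum_gram (R : numFieldType) (s : {rmorphism R -> R}) (hK : involutive s)
  (hge : forall y, 0 <= s y * y) (heq : forall y, s y * y = 0 -> y = 0)
  N M (Phi : 'M[R]_(N, M)) (hP : Phi *m adjm s Phi = 1%:M)
  m (F : 'M[R]_(N, m)) :
  \sum_(i < M) gram s (row_mx (col i Phi) F) =
  (N%:R - m%:R) * \det (adjm s F *m F).
Proof.
have [h0|hd] := eqVneq (\det (adjm s F *m F)) 0.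
  rewrite h0 mulr0; apply: big1 => i _; exact: (gram_sing hge heq _ h0).
under eq_bigr => i _ do rewrite (gram_border hK _ hd).
rewrite -big_distrl /=; congr (_ * _).
have -> : \sum_(i < M) (adjm s (projP s F *m col i Phi) *m (projP s F *m col i Phi)) 0 0
   = \sum_(i < M) (adjm s (col i (projP s F *m Phi)) *m col i (projP s F *m Phi)) 0 0.
  by apply: eq_bigr => i _; rewrite !colE !mulmxA.
rewrite (sum_quad_cols s (projP s F *m Phi)) mxtrace_mulC adjmM projP_adj // mulmxA -(mulmxA _ Phi) hP.
by rewrite mulmx1 projP_idem // tr_projP.
Qed.

Lemma gram_perm (R : numFieldType) (s : {rmorphism R -> R}) N n
  (X : 'M[R]_(N, n)) (p : {perm 'I_n}) : gram s (X *m perm_mx p) = gram s X.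
Proof.
rewrite /gram adjmM -mulmxA det_mulmx mulmxA det_mulmx.
rewrite /adjm det_map_mx det_tr det_perm rmorph_sign mulrCA mulrA.
by rewrite -mulrA -signr_addb addbb expr0 mulr1.
Qed.

Lemma gram_inj_eq (R : numFieldType) (s : {rmorphism R -> R}) N M
  (Phi : 'M[R]_(N, M)) n n' (f : 'I_n -> 'I_M) (g : 'I_n' -> 'I_M) :
  injective f -> injective g -> [set f x | x in 'I_n] = [set g x | x in 'I_n'] ->
  gram s (colsub f Phi) = gram s (colsub g Phi).
Proof.
move=> fi gi him.
have e : n' = n.
  have := congr1 (fun A : {set 'I_M} => #|A|) him; rewrite /= !card_imset // !card_ord.
  by move=> ->.
subst n'.
pose h x := odflt x [pick y | f y == g x].
have fh x : f (h x) = g x.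
  rewrite /h; case: pickP => [y /eqP //|none] /=.
  have : g x \in [set f x | x in 'I_n] by rewrite him imset_f.
  by case/imsetP => y _ hy; have := none y; rewrite hy eqxx.
have hi : injective h by move=> x y hxy; apply: gi; rewrite -!fh hxy.
have -> : colsub g Phi = col_perm (perm hi) (colsub f Phi).
  by apply/matrixP => r c; rewrite !mxE permE fh.
by rewrite col_permE gram_perm.
Qed.

Lemma gram_noninj (R : numFieldType) (s : {rmorphism R -> R}) N M
  (Phi : 'M[R]_(N, M)) n (f : 'I_n -> 'I_M) x y :
  x != y -> f x = f y -> gram s (colsub f Phi) = 0.
Proof.
move=> nxy fxy; rewrite /gram -det_tr.
apply: (determinant_alternate nxy) => j; rewrite !mxE.
by apply: eq_bigr => r _; rewrite !mxE fxy.
Qed.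

Definition gi M (J : {set 'I_M}) (i : 'I_M) (r : 'I_(1 + #|J|)) : 'I_M :=
  match split r with inl _ => i | inr r' => @enum_val _ (mem J) r' end.
Arguments gi {M} J i r.

Lemma row_gi (R : numFieldType) N M (Phi : 'M[R]_(N, M)) (J : {set 'I_M}) i :
  row_mx (col i Phi) (subcols Phi J) = colsub (gi J i) Phi.
Proof.
apply/matrixP => a b; rewrite /gi !mxE.
by case: (split b) => c; rewrite !mxE.
Qed.

Lemma enum_im M (K : {set 'I_M}) :
  [set (@enum_val _ (mem K)) x | x in 'I_#|K|] = K.
Proof.
apply/setP => y; apply/imsetP/idP => [[x _ ->]|hy].
  exact: enum_valP.
by exists (enum_rank_in hy y); rewrite // enum_rankK_in.
Qed.

Lemma gi_im M (J : {set 'I_M}) i :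
  [set gi J i x | x in 'I_(1 + #|J|)] = i |: J.
Proof.
apply/setP => y; rewrite in_setU1; apply/imsetP/idP => [[x _ ->]|].
  rewrite /gi; case: (split x) => c; first by rewrite eqxx.
  by rewrite enum_valP orbT.
case/orP => [/eqP ->|hy].
  by exists (lshift #|J| (0 : 'I_1)); rewrite // /gi -[lshift _ _]/(unsplit (inl _)) unsplitK.
exists (rshift 1 (enum_rank_in hy y)) => //.
by rewrite /gi -[rshift _ _]/(unsplit (inr _)) unsplitK enum_rankK_in.
Qed.

Lemma gi_inj M (J : {set 'I_M}) i : i \notin J -> injective (gi J i).
Proof.
move=> hi x y; rewrite /gi.
case: splitP => [a ha|a ha]; case: splitP => [b hb|b hb].
- by move=> _; apply/val_inj; rewrite /= ha hb (ord1 a) (ord1 b).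
- by move=> e; move: hi; rewrite e enum_valP.
- by move=> e; move: hi; rewrite -e enum_valP.
- by move/enum_val_inj => e; apply/val_inj; rewrite /= ha hb e.
Qed.

Lemma gi_in (R : numFieldType) (s : {rmorphism R -> R}) N M
  (Phi : 'M[R]_(N, M)) (J : {set 'I_M}) i :
  i \in J -> gram s (row_mx (col i Phi) (subcols Phi J)) = 0.
Proof.
move=> hi; rewrite row_gi.
apply: (@gram_noninj _ s _ _ Phi _ (gi J i) (lshift #|J| (0 : 'I_1))
          (rshift 1 (enum_rank_in hi i))).
  apply/eqP => /(congr1 val) /=; rewrite add1n //.
rewrite /gi -[lshift _ _]/(unsplit (inl _)) -[rshift _ _]/(unsplit (inr _)).
by rewrite !unsplitK enum_rankK_in.
Qed.

Lemma gi_notin (R : numFieldType) (s : {rmorphism R -> R}) N M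
  (Phi : 'M[R]_(N, M)) (J : {set 'I_M}) i :
  i \notin J -> gram s (row_mx (col i Phi) (subcols Phi J)) =
                gram s (subcols Phi (i |: J)).
Proof.
move=> hi; rewrite row_gi /subcols; apply: gram_inj_eq.
- exact: gi_inj.
- exact: enum_val_inj.
- by rewrite gi_im enum_im.
Qed.

Lemma main_gen (R : numFieldType) (s : {rmorphism R -> R}) (hK : involutive s)
  (hge : forall y, 0 <= s y * y) (heq : forall y, s y * y = 0 -> y = 0)
  N M (Phi : 'M[R]_(N, M)) (hP : Phi *m adjm s Phi = 1%:M) m (hm : (m < N)%N)
  (hD : forall K K' : {set 'I_M}, #|K| = m.+1 -> #|K'| = m.+1 ->
     gram s (subcols Phi K) = gram s (subcols Phi K')) :
  forall J J' : {set 'I_M}, #|J| = m -> #|J'| = m ->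
     gram s (subcols Phi J) = gram s (subcols Phi J').
Proof.
have key (J : {set 'I_M}) : #|J| = m -> (N%:R - m%:R) * gram s (subcols Phi J)
    = \sum_(i | i \notin J) gram s (subcols Phi (i |: J)).
  move=> hJ; rewrite -hJ; have := sum_gram hK hge heq hP (subcols Phi J).
  rewrite -/(gram s _) => <-.
  rewrite (bigID (fun i => i \in J)) /= big1 ?add0r.
    by apply: eq_bigr => i hi; rewrite gi_notin.
  by move=> i hi; rewrite gi_in.
have hsum (J J' : {set 'I_M}) : #|J| = m -> #|J'| = m ->
    \sum_(i | i \notin J) gram s (subcols Phi (i |: J)) =
    \sum_(i | i \notin J') gram s (subcols Phi (i |: J')).
  move=> hJ hJ'.
  case: (pickP (fun K : {set 'I_M} => #|K| == m.+1)) => [K0 /eqP hK0|none].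
    pose c := gram s (subcols Phi K0).
    have cst (L : {set 'I_M}) : #|L| = m ->
        \sum_(i | i \notin L) gram s (subcols Phi (i |: L)) = M%:R * c - m%:R * c.
      move=> hL; rewrite (eq_bigr (fun _ => c)); last first.
        by move=> i hi; apply: hD => //; rewrite cardsU1 hi hL.
      apply/eqP; rewrite eq_sym subr_eq.
      have -> : M%:R * c = \sum_(i < M) c by rewrite sumr_const card_ord mulr_natl.
      rewrite (bigID (fun i => i \in L)) /= addrC !sumr_const hL mulr_natl.
      by [].
    by rewrite !cst.
  rewrite big1; last by move=> i hi; have h := none (i |: J); exfalso; move: h; rewrite cardsU1 hi hJ eqxx.
  by rewrite big1 // => i hi; have h := none (i |: J'); exfalso; move: h; rewrite cardsU1 hi hJ' eqxx.
move=> J J' hJ hJ'.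
have hNm : N%:R - m%:R != 0 :> R.
  by rewrite -natrB ?(ltnW hm) // pnatr_eq0 subn_eq0 -ltnNge hm.
apply: (mulfI hNm); by rewrite key // key // (hsum J J').
Qed.

Lemma adjm_id (R : rcfType) m n (X : 'M[R]_(m, n)) :
  adjm (idfun : {rmorphism R -> R}) X = X^T.
Proof. by apply/matrixP => i j; rewrite !mxE. Qed.

Lemma adjm_conj (C : numClosedFieldType) m n (X : 'M[C]_(m, n)) :
  adjm (Num.conj : {rmorphism C -> C}) X = adjmx X.
Proof. by apply/matrixP => i j; rewrite !mxE. Qed.

Theorem theorem9 :
  (forall (R : rcfType) (N M k : nat) (Phi : 'M[R]_(N, M)),
     parsevalR Phi -> (0 < k <= N)%N ->
     (forall K K' : {set 'I_M}, #|K| = k -> #|K'| = k ->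
        volR (subcols Phi K) = volR (subcols Phi K')) ->
     (forall J J' : {set 'I_M}, #|J| = k.-1 -> #|J'| = k.-1 ->
        volR (subcols Phi J) = volR (subcols Phi J')))
  /\
  (forall (C : numClosedFieldType) (N M k : nat) (Phi : 'M[C]_(N, M)),
     parsevalC Phi -> (0 < k <= N)%N ->
     (forall K K' : {set 'I_M}, #|K| = k -> #|K'| = k ->
        volC (subcols Phi K) = volC (subcols Phi K')) ->
     (forall J J' : {set 'I_M}, #|J| = k.-1 -> #|J'| = k.-1 ->
        volC (subcols Phi J) = volC (subcols Phi J'))).
Proof.
split.
- move=> R N M k Phi hP /andP [k0 kN] hV J J' hJ hJ'.
  pose s : {rmorphism R -> R} := idfun.
  have hK : involutive s by [].
  have hge : forall y, 0 <= s y * y by move=> y; rewrite /= -expr2 sqr_ge0.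
  have heq : forall y, s y * y = 0 -> y = 0.
    by move=> y /eqP; rewrite mulf_eq0 orbb => /eqP.
  have volE m (F : 'M[R]_(N, m)) : volR F = Num.sqrt (gram s F).
    by rewrite /volR /gram adjm_id.
  have hP' : Phi *m adjm s Phi = 1%:M by rewrite adjm_id.
  have ek : k = k.-1.+1 by rewrite prednK.
  rewrite !volE; congr Num.sqrt.
  apply: (main_gen hK hge heq hP' _ _ hJ hJ').
    by rewrite -ltnS -ek.
  move=> K K' hK1 hK2; apply/eqP; rewrite -eqr_sqrt; try exact: gram_ge0.
  by rewrite -!volE (hV K K') // ek.
- move=> C N M k Phi hP /andP [k0 kN] hV J J' hJ hJ'.
  pose s : {rmorphism C -> C} := Num.conj.
  have hK : involutive s by exact: conjCK.
  have hge : forall y, 0 <= s y * y by move=> y; rewrite mulrC mul_conjC_ge0.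
  have heq : forall y, s y * y = 0 -> y = 0.
    by move=> y /eqP; rewrite mulrC mul_conjC_eq0 => /eqP.
  have volE m (F : 'M[C]_(N, m)) : volC F = sqrtC (gram s F).
    by rewrite /volC /gram adjm_conj.
  have hP' : Phi *m adjm s Phi = 1%:M by rewrite adjm_conj.
  have ek : k = k.-1.+1 by rewrite prednK.
  rewrite !volE; congr sqrtC.
  apply: (main_gen hK hge heq hP' _ _ hJ hJ').
    by rewrite -ltnS -ek.
  move=> K K' hK1 hK2.
  have := hV K K'; rewrite !volE ek => /(_ hK1 hK2) h.
  by rewrite -[LHS]sqrtCK h sqrtCK.
Qed.
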